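(* For a two-port FAS ($N=2$) with correlation parameter $\mu=\mu_2\in(0,1)$, the level crossing rate of $|h_{\rm FAS}|=\max\{|h_1|,|h_2|\}$ at threshold $x_{\rm th}>0$ is $$L(x_{\rm th})=\frac{2\sqrt{2\pi}\, f_D\,x_{\rm th}}{\sigma ^{3}(1-\mu^{2})}\, e^{-\frac {x_{\rm th}^2}{\sigma ^{2}(1-\mu^2)}} \sum_{k=0}^{\infty} \frac{\left(\mu x_{\rm th}\right)^{2k}}{(k!)^2 \left( \sigma ^{2}(1-\mu^2) \right)^{k-1}}\,\gamma \!\left( k+1, \frac{x_{\rm th}^2}{\sigma ^{2}(1-\mu^2)} \right),$$ where $\gamma(\cdot,\cdot)$ is the lower incomplete Gamma function.
   Context: Two-port FAS channel model: $h_1=\sigma x_0+j\sigma y_0$, $h_2=\sigma(\sqrt{1-\mu^2}\,x_2+\mu x_0)+j\sigma(\sqrt{1-\mu^2}\,y_2+\mu y_0)$, with $x_0,x_2,y_0,y_2$ independent real Gaussian with mean $0$ and variance $1/2$, $\sigma>0$. The joint envelope density is $p_{|h_1|,|h_2|}(x_1,x_2)=\frac{4x_1x_2}{\sigma^4(1-\mu^2)}e^{-\frac{x_1^2+x_2^2}{\sigma^2(1-\mu^2)}}I_0\!\left(\frac{2\mu x_1x_2}{\sigma^2(1-\mu^2)}\right)$ for $x_1,x_2\ge0$, $I_0$ the zero-order modified Bessel function of the first kind. Level crossing rate: the time derivative $|\dot h_i|$ of each port envelope is modeled as zero-mean Gaussian with density $p_{|\dot h_i|}$ and variance $\pi^2\sigma^2f_D^2$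 ($f_D$ the maximum Doppler frequency); the joint density of derivative and value of the selected envelope is $p_{|\dot h|,|h|}(\dot x,x)=p_{|\dot h_1|}(\dot x)\int_0^x p_{|h_1|,|h_2|}(x,x_2)\,dx_2+p_{|\dot h_2|}(\dot x)\int_0^x p_{|h_1|,|h_2|}(x_1,x)\,dx_1$, and the LCR is $L(x_{\rm th})=\int_0^\infty \dot x\,p_{|\dot h|,|h|}(\dot x,x_{\rm th})\,d\dot x$. *)

(* Defs.v *)
From Stdlib Require Import Reals ZArith.
From Coquelicot Require Import Coquelicot.
Open Scope R_scope.

Definition besselI0 (z : R) : R :=
  Series (fun k : nat => (z / 2) ^ (2 * k) / (INR (fact k)) ^ 2).

(* Lower incomplete Gamma function gamma(n, x) = int_0^x t^(n-1) e^(-t) dt,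
   for a positive integer first argument n (only gamma(k+1, .) is used). *)
Definition lower_gamma (n : nat) (x : R) : R :=
  RInt (fun t => t ^ (n - 1) * exp (- t)) 0 x.

Definition gauss_pdf (v : R) (x : R) : R :=
  / sqrt (2 * PI * v) * exp (- (x ^ 2) / (2 * v)).

(* Joint density of (|h1|, |h2|) for x1, x2 >= 0. *)
Definition env_pdf (sigma mu x1 x2 : R) : R :=
  4 * x1 * x2 / (sigma ^ 4 * (1 - mu ^ 2))
  * exp (- (x1 ^ 2 + x2 ^ 2) / (sigma ^ 2 * (1 - mu ^ 2)))
  * besselI0 (2 * mu * x1 * x2 / (sigma ^ 2 * (1 - mu ^ 2))).

Definition deriv_pdf (sigma fD : R) (xd : R) : R :=
  gauss_pdf (PI ^ 2 * sigma ^ 2 * fD ^ 2) xd.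

(* Joint density of derivative and value of the selected envelope max(|h1|,|h2|). *)
Definition sel_joint_pdf (sigma mu fD xd x : R) : R :=
  deriv_pdf sigma fD xd * RInt (fun x2 => env_pdf sigma mu x x2) 0 x
  + deriv_pdf sigma fD xd * RInt (fun x1 => env_pdf sigma mu x1 x) 0 x.

Definition is_LCR (sigma mu fD xth L : R) : Prop :=
  is_RInt_gen (fun xd => xd * sel_joint_pdf sigma mu fD xd xth)
    (at_point 0) (Rbar_locally p_infty) L.

(* Main.v *)
Require Import Defs.
From Stdlib Require Import Reals ZArith Lra Lia FunctionalExtensionality.
From Coquelicot Require Import Coquelicot.
Open Scope R_scope.

Lemma partial_le (a : nat -> R) (l : R) :
  (forall k, 0 <= a k) -> is_series a l -> forall n, sum_n a n <= l.
Proof.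
  intros Ha Hs n. apply is_lim_seq_incr_compare.
  - exact Hs.
  - intros m. rewrite sum_Sn. unfold plus; simpl. specialize (Ha (S m)). lra.
Qed.

Lemma sum_n_minusR (p q : nat -> R) n :
  sum_n (fun k => p k - q k) n = sum_n p n - sum_n q n.
Proof.
  induction n.
  - rewrite !sum_O. reflexivity.
  - rewrite !sum_Sn, IHn. unfold plus; simpl. ring.
Qed.

Lemma RInt_sum (u : nat -> R -> R) (a b : R) :
  (forall k, ex_RInt (u k) a b) -> forall n,
  ex_RInt (fun y => sum_n (fun k => u k y) n) a b /\
  RInt (fun y => sum_n (fun k => u k y) n) a b = sum_n (fun k => RInt (u k) a b) n.
Proof.
  intros Hu n. induction n.
  - rewrite sum_O. split.
    + apply ex_RInt_ext with (u 0%nat). intros; rewrite sum_O; reflexivity. apply Hu.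
    + apply RInt_ext. intros; rewrite sum_O; reflexivity.
  - destruct IHn as [He Hr].
    assert (E : forall y, sum_n (fun k => u k y) (S n) =
               plus (sum_n (fun k => u k y) n) (u (S n) y)) by (intros; apply sum_Sn).
    split.
    + apply ex_RInt_ext with (fun y => plus (sum_n (fun k => u k y) n) (u (S n) y)).
      intros; rewrite E; reflexivity.
      apply (ex_RInt_plus (V:=R_NormedModule)); auto.
    + rewrite (RInt_ext _ (fun y => plus (sum_n (fun k => u k y) n) (u (S n) y))).
      2:{ intros; rewrite E; reflexivity. }
      rewrite (RInt_plus (V:=R_CompleteNormedModule)); auto. rewrite Hr, sum_Sn. reflexivity.
Qed.

Lemma series_RInt (f : R -> R) (u : nat -> R -> R) (x : R) (eps : nat -> R) :
  0 <= x -> (forall k, ex_RInt (u k) 0 x) -> ex_RInt f 0 x -> is_lim_seq eps 0 ->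
  (forall n y, 0 <= y <= x -> Rabs (f y - sum_n (fun k => u k y) n) <= eps n) ->
  is_series (fun k => RInt (u k) 0 x) (RInt f 0 x).
Proof.
  intros Hx Hu Hf He Hb.
  assert (D : is_lim_seq (fun n => RInt f 0 x - sum_n (fun k => RInt (u k) 0 x) n) 0).
  { apply is_lim_seq_abs_0.
    apply is_lim_seq_le_le with (fun _ => 0) (fun n => x * eps n).
    - intros n. split; [apply Rabs_pos|].
      destruct (RInt_sum u 0 x Hu n) as [E1 E2].
      rewrite <- E2.
      assert (HH : RInt f 0 x - RInt (fun y => sum_n (fun k => u k y) n) 0 x
                   = RInt (fun y => f y - sum_n (fun k => u k y) n) 0 x).
      { symmetry. apply (RInt_minus f (fun y => sum_n (fun k => u k y) n)); auto. }
      rewrite HH.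
      replace (x * eps n) with ((x - 0) * eps n) by ring.
      apply abs_RInt_le_const; auto.
      apply (ex_RInt_minus f (fun y => sum_n (fun k => u k y) n)); auto.
    - apply is_lim_seq_const.
    - replace (Finite 0) with (Rbar_mult x 0) by (simpl; f_equal; ring).
      apply is_lim_seq_scal_l. exact He. }
  assert (D2 : is_lim_seq (fun n => RInt f 0 x - (RInt f 0 x - sum_n (fun k => RInt (u k) 0 x) n))
                 (RInt f 0 x - 0)).
  { apply is_lim_seq_minus'. apply is_lim_seq_const. exact D. }
  rewrite Rminus_0_r in D2.
  eapply is_lim_seq_ext in D2. 2:{ intros n. ring_simplify. reflexivity. }
  exact D2.
Qed.

Lemma Rbar_mult_pos_p (c : R) : 0 < c -> Rbar_mult c p_infty = p_infty.
Proof.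
  intros Hc. simpl. destruct (Rle_dec 0 c) as [H|H]; [|lra].
  destruct (Rle_lt_or_eq_dec 0 c H); [reflexivity|lra].
Qed.

Lemma lim_neg_sq (v : R) : 0 < v ->
  is_lim (fun t => - t ^ 2 / (2 * v)) p_infty m_infty.
Proof.
  intros Hv.
  apply is_lim_ext with (fun t => - ((/ (2*v)) * (t * t))).
  { intros t. field. lra. }
  change m_infty with (Rbar_opp p_infty).
  apply is_lim_opp.
  assert (H : is_lim (fun y => y * y) p_infty (Rbar_mult p_infty p_infty)).
  { apply is_lim_mult; try apply is_lim_id. simpl. exact I. }
  change (Rbar_mult p_infty p_infty) with p_infty in H.
  apply (is_lim_scal_l _ (/ (2*v))) in H.
  rewrite (Rbar_mult_pos_p (/ (2*v))) in H by (apply Rinv_0_lt_compat; lra).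
  exact H.
Qed.

Lemma gauss_moment (v : R) : 0 < v ->
  is_RInt_gen (fun t => t * gauss_pdf v t) (at_point 0) (Rbar_locally p_infty)
    (v / sqrt (2 * PI * v)).
Proof.
  intros Hv.
  assert (Hs : 0 < sqrt (2 * PI * v)) by (apply sqrt_lt_R0; generalize PI_RGT_0; nra).
  set (F := fun t => - v / sqrt (2 * PI * v) * exp (- t ^ 2 / (2 * v))).
  assert (HD : forall t, is_derive F t (t * gauss_pdf v t)).
  { intros t. unfold F, gauss_pdf. auto_derive; [exact I|].
    replace (- (t * (t*1)) * /(2*v)) with (-t^2/(2*v)) by (field; lra). field. split; lra. }
  assert (HDe : Derive F = fun t => t * gauss_pdf v t).
  { apply functional_extensionality. intros t. apply is_derive_unique, HD. }
  replace (v / sqrt (2 * PI * v)) with (0 - F 0).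
  2:{ unfold F. replace (- 0 ^ 2 / (2 * v)) with 0 by (field; lra). rewrite exp_0. field. lra. }
  rewrite <- HDe.
  apply is_RInt_gen_Derive.
  - apply filter_forall. intros ab x _. unfold F. auto_derive. exact I.
  - apply filter_forall. intros ab x _. rewrite HDe. apply (ex_derive_continuous (K:=R_AbsRing) (V:=R_NormedModule) (fun t => t * gauss_pdf v t)).
    unfold gauss_pdf. auto_derive. exact I.
  - intros P HP. exact (locally_singleton _ _ HP).
  - unfold F.
    replace 0 with (-v / sqrt (2*PI*v) * 0) by ring.
    change (is_lim (fun t => - v / sqrt (2 * PI * v) * exp (- t ^ 2 / (2 * v))) p_infty
             (Rbar_mult (-v / sqrt (2*PI*v)) 0)).
    apply is_lim_scal_l.
    apply is_lim_comp with m_infty.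
    + apply is_lim_exp_m.
    + apply lim_neg_sq; exact Hv.
    + apply filter_forall. intros y. discriminate.
Qed.

Definition bcoef (k : nat) : R := / (INR (fact k)) ^ 2.

Lemma bcoef_pos k : 0 < bcoef k.
Proof. unfold bcoef. apply Rinv_0_lt_compat. apply pow_lt. apply lt_0_INR, lt_O_fact. Qed.

Lemma bessel_CV : CV_radius bcoef = p_infty.
Proof.
  apply CV_radius_infinite_DAlembert.
  - intros n. apply Rgt_not_eq, bcoef_pos.
  - apply is_lim_seq_ext with (fun n => / (INR (S n) ^ 2)).
    { intros n. unfold bcoef. rewrite fact_simpl, mult_INR.
      assert (H1 : 0 < INR (S n)) by apply lt_0_INR, Nat.lt_0_succ.
      assert (H2 : 0 < INR (fact n)) by apply lt_0_INR, lt_O_fact.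
      rewrite Rabs_pos_eq.
      - field. split; lra.
      - apply Rle_trans with 0; [lra|]. 
        left. apply Rdiv_lt_0_compat; apply Rinv_0_lt_compat; apply pow_lt; nra. }
    replace (Finite 0) with (Rbar_inv p_infty) by reflexivity.
    apply is_lim_seq_inv; [|discriminate].
    apply is_lim_seq_le_p_loc with (fun n => INR (S n)).
    + apply filter_forall. intros n.
      assert (H1 : 1 <= INR (S n)) by (apply (le_INR 1); lia).
      nra.
    + apply (is_lim_seq_incr_1 INR). apply is_lim_seq_INR.
Qed.

Lemma bessel_eq z : besselI0 z = PSeries bcoef ((z/2)^2).
Proof.
  unfold besselI0, PSeries. apply Series_ext. intros k.
  rewrite pow_mult. unfold bcoef. field. apply INR_fact_neq_0.
Qed.

Lemma bessel_is_series w : is_series (fun k => bcoef k * w^k) (PSeries bcoef w).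
Proof.
  apply is_pseries_R. apply PSeries_correct. apply CV_radius_inside.
  rewrite bessel_CV. exact I.
Qed.

Lemma bessel_tail w1 w2 n : 0 <= w1 <= w2 ->
  0 <= PSeries bcoef w1 - sum_n (fun k => bcoef k * w1^k) n <=
       PSeries bcoef w2 - sum_n (fun k => bcoef k * w2^k) n.
Proof.
  intros Hw. split.
  - assert (H := partial_le _ _ (fun k => Rmult_le_pos _ _ (Rlt_le _ _ (bcoef_pos k)) (pow_le _ k (proj1 Hw))) (bessel_is_series w1) n).
    lra.
  - assert (Hs : is_series (fun k => bcoef k * w2^k - bcoef k * w1^k) (PSeries bcoef w2 - PSeries bcoef w1)).
    { apply (is_series_minus (K:=R_AbsRing) (V:=R_NormedModule)); apply bessel_is_series. }
    assert (Hp : forall k, 0 <= bcoef k * w2^k - bcoef k * w1^k).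
    { intros k.
      assert (0 <= bcoef k * (w2^k - w1^k)).
      { apply Rmult_le_pos. left; apply bcoef_pos.
        assert (w1^k <= w2^k) by (apply pow_incr; lra). lra. }
      nra. }
    assert (H := partial_le _ _ Hp Hs n).
    rewrite sum_n_minusR in H. lra.
Qed.

Lemma powerRZ_pred (a : R) (k : nat) : a <> 0 -> powerRZ a (Z.of_nat k - 1) = a^k * / a.
Proof.
  intros Ha. unfold Z.sub. rewrite powerRZ_add by exact Ha.
  rewrite <- pow_powerRZ. simpl. f_equal. field. exact Ha.
Qed.

Lemma u_int (a mu x : R) k : 0 < a ->
  RInt (fun y => y * exp (- y ^ 2 / a) * (bcoef k * (((2*mu*x*y/a)/2)^2)^k)) 0 x
  = bcoef k * (mu^2*x^2/a)^k * (a/2) * lower_gamma (S k) (x^2/a).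
Proof.
  intros Ha.
  unfold lower_gamma. replace (S k - 1)%nat with k by lia.
  set (f := fun t => t^k * exp (-t)).
  set (C := bcoef k * (mu^2*x^2/a)^k * (a/2)).
  assert (Hc := is_RInt_comp (V:=R_CompleteNormedModule) f (fun y => y^2/a) (fun y => 2*y/a) 0 x).
  cbv beta in Hc.
  replace (0^2/a) with 0 in Hc by (field; lra).
  apply is_RInt_unique.
  apply is_RInt_ext with (fun y => C * ((2*y/a) * (f (y^2/a)))).
  { intros y _. unfold f, C.
    replace (((2*mu*x*y/a)/2)^2) with ((mu^2*x^2/a) * (y^2/a)) by (field; lra).
    rewrite Rpow_mult_distr.
    replace (- y ^ 2 / a) with (- (y^2/a)) by (field; lra).
    match goal with |- ?l = ?r => change (@eq R l r) end. field. lra. }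
  apply (is_RInt_scal (V:=R_NormedModule)).
  apply Hc.
  - intros z _. unfold f. apply (ex_derive_continuous (K:=R_AbsRing) (V:=R_NormedModule)).
    auto_derive. exact I.
  - intros z _. split.
    + auto_derive. exact I. field. lra.
    + apply (ex_derive_continuous (K:=R_AbsRing) (V:=R_NormedModule) (fun y => 2*y/a)).
      auto_derive. exact I.
Qed.

Lemma g_integral (a mu x : R) : 0 < a -> 0 <= mu -> 0 < x ->
  is_series (fun k => (mu*x)^(2*k) / ((INR (fact k))^2 * powerRZ a (Z.of_nat k - 1))
                       * lower_gamma (S k) (x^2/a))
     (2 * RInt (fun y => y * exp (-y^2/a) * besselI0 (2*mu*x*y/a)) 0 x).
Proof.
  intros Ha Hmu Hx.
  set (w := fun y => ((2*mu*x*y/a)/2)^2).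
  set (u := fun k y => y * exp (- y ^ 2 / a) * (bcoef k * (w y)^k)).
  set (g := fun y => y * exp (- y ^ 2 / a) * PSeries bcoef (w y)).
  assert (Eg : RInt (fun y => y * exp (-y^2/a) * besselI0 (2*mu*x*y/a)) 0 x = RInt g 0 x).
  { apply RInt_ext. intros y _. unfold g, w. rewrite bessel_eq. reflexivity. }
  rewrite Eg.
  assert (Hs : is_series (fun k => RInt (u k) 0 x) (RInt g 0 x)).
  { apply series_RInt with (fun n => x * (PSeries bcoef (w x) - sum_n (fun k => bcoef k * (w x)^k) n)).
    - lra.
    - intros k. apply (ex_RInt_continuous (V:=R_CompleteNormedModule)). intros z _.
      apply (ex_derive_continuous (K:=R_AbsRing) (V:=R_NormedModule) (u k)).
      unfold u, w. auto_derive. exact I.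
    - apply (ex_RInt_continuous (V:=R_CompleteNormedModule)). intros z _.
      apply (ex_derive_continuous (K:=R_AbsRing) (V:=R_NormedModule) g).
      unfold g, w. auto_derive.
      apply ex_derive_PSeries. rewrite bessel_CV. exact I.
    - replace (Finite 0) with (Rbar_mult x 0) by (simpl; f_equal; ring).
      apply is_lim_seq_scal_l.
      replace (Finite 0) with (Finite (PSeries bcoef (w x) - PSeries bcoef (w x))) by (f_equal; ring).
      apply is_lim_seq_minus'. apply is_lim_seq_const. apply bessel_is_series.
    - intros n y Hy.
      assert (E : sum_n (fun k => u k y) n = y * exp (- y ^ 2 / a) * sum_n (fun k => bcoef k * (w y)^k) n).
      { unfold u. apply (sum_n_mult_l (K:=R_Ring)). }
      rewrite E. unfold g.
      replace (y * exp (- y ^ 2 / a) * PSeries bcoef (w y) -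
               y * exp (- y ^ 2 / a) * sum_n (fun k : nat => bcoef k * w y ^ k) n)
        with (y * exp (- y ^ 2 / a) * (PSeries bcoef (w y) - sum_n (fun k : nat => bcoef k * w y ^ k) n)) by ring.
      assert (Hw : 0 <= w y <= w x).
      { assert (Hc : 0 <= mu * x / a).
        { apply Rmult_le_pos; [nra|left; apply Rinv_0_lt_compat; lra]. }
        unfold w. replace (2*mu*x*y/a/2) with ((mu*x/a)*y) by (field; lra).
        replace (2*mu*x*x/a/2) with ((mu*x/a)*x) by (field; lra).
        split. apply pow2_ge_0. apply pow_incr. split; nra. }
      assert (Ht := bessel_tail (w y) (w x) n Hw).
      assert (He : 0 < exp (- y ^ 2 / a) <= 1).
      { split. apply exp_pos. rewrite <- exp_0.
        assert (0 <= y^2/a) by (apply Rmult_le_pos; [apply pow2_ge_0|left; apply Rinv_0_lt_compat; lra]).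
        assert (Hz : - y^2/a <= 0) by (unfold Rdiv in *; lra).
        destruct (Rle_lt_or_eq_dec _ _ Hz) as [h|h].
        - left; apply exp_increasing; exact h.
        - right; rewrite h; reflexivity. }
      rewrite Rabs_pos_eq.
      + apply Rmult_le_compat; try lra.
        * apply Rmult_le_pos; lra.
        * assert (y * exp (- y ^ 2 / a) <= y * 1) by (apply Rmult_le_compat_l; lra). lra.
      + apply Rmult_le_pos; [apply Rmult_le_pos|]; lra. }
  assert (Hs2 := is_series_scal_l (K:=R_AbsRing) (V:=R_NormedModule) 2 _ _ Hs).
  eapply is_series_ext; [|exact Hs2].
  intros k. change (2 * RInt (u k) 0 x = (mu*x)^(2*k) / ((INR (fact k))^2 * powerRZ a (Z.of_nat k - 1))
                       * lower_gamma (S k) (x^2/a)).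
  unfold u, w. rewrite u_int by exact Ha.
  rewrite powerRZ_pred by lra.
  rewrite pow_mult.
  replace (mu^2*x^2/a) with ((mu*x)^2 * / a) by (field; lra).
  rewrite Rpow_mult_distr, pow_inv. unfold bcoef.
  assert (a^k <> 0) by (apply pow_nonzero; lra).
  assert (INR (fact k) <> 0) by apply INR_fact_neq_0.
  field. repeat split; auto; lra.
Qed.

Lemma g_ex_RInt (a mu x : R) :
  ex_RInt (fun y => y * exp (-y^2/a) * besselI0 (2*mu*x*y/a)) 0 x.
Proof.
  apply ex_RInt_ext with (fun y => y * exp (-y^2/a) * PSeries bcoef (((2*mu*x*y/a)/2)^2)).
  { intros y _. rewrite bessel_eq. reflexivity. }
  apply (ex_RInt_continuous (V:=R_CompleteNormedModule)). intros z _.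
  apply (ex_derive_continuous (K:=R_AbsRing) (V:=R_NormedModule)
           (fun y => y * exp (-y^2/a) * PSeries bcoef (((2*mu*x*y/a)/2)^2))).
  auto_derive. apply ex_derive_PSeries. rewrite bessel_CV. exact I.
Qed.

Lemma env_factor sigma mu x y : 0 < sigma -> 0 < 1 - mu^2 ->
  env_pdf sigma mu x y = 4*x/(sigma^4*(1-mu^2)) * exp(-x^2/(sigma^2*(1-mu^2))) *
     (y*exp(-y^2/(sigma^2*(1-mu^2)))*besselI0(2*mu*x*y/(sigma^2*(1-mu^2)))).
Proof.
  intros Hs Hm. unfold env_pdf.
  replace (- (x^2 + y^2) / (sigma^2*(1-mu^2))) with (-x^2/(sigma^2*(1-mu^2)) + - y^2/(sigma^2*(1-mu^2))) by (field; nra).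
  rewrite exp_plus.
  set (E1 := exp _). set (E2 := exp _). set (B := besselI0 _).
  set (c := sigma ^ 4 * (1 - mu ^ 2)).
  unfold Rdiv. ring.
Qed.

Lemma env_sym s m p q : env_pdf s m p q = env_pdf s m q p.
Proof.
  unfold env_pdf.
  replace (p^2 + q^2) with (q^2 + p^2) by ring.
  replace (2*m*p*q) with (2*m*q*p) by ring.
  replace (4*p*q) with (4*q*p) by ring. reflexivity.
Qed.

Theorem corollary3 (sigma mu fD xth : R)
  (Hsigma : 0 < sigma) (Hmu0 : 0 < mu) (Hmu1 : mu < 1)
  (HfD : 0 < fD) (Hxth : 0 < xth) :
  is_LCR sigma mu fD xth
    (2 * sqrt (2 * PI) * fD * xth / (sigma ^ 3 * (1 - mu ^ 2))
     * exp (- (xth ^ 2) / (sigma ^ 2 * (1 - mu ^ 2)))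
     * Series (fun k : nat =>
         (mu * xth) ^ (2 * k)
         / ((INR (fact k)) ^ 2 * powerRZ (sigma ^ 2 * (1 - mu ^ 2)) (Z.of_nat k - 1))
         * lower_gamma (S k) (xth ^ 2 / (sigma ^ 2 * (1 - mu ^ 2))))).
Proof.
  assert (Hm : 0 < 1 - mu^2) by nra.
  assert (Ha : 0 < sigma^2 * (1 - mu^2)) by (apply Rmult_lt_0_compat; [apply pow_lt|]; lra).
  set (a := sigma^2 * (1 - mu^2)) in *.
  set (I := RInt (fun y => y * exp (-y^2/a) * besselI0 (2*mu*xth*y/a)) 0 xth).
  assert (HS := is_series_unique _ _ (g_integral a mu xth Ha (Rlt_le _ _ Hmu0) Hxth)).
  fold I in HS. rewrite HS.
  set (R1 := RInt (fun x2 => env_pdf sigma mu xth x2) 0 xth).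
  assert (HR2 : RInt (fun x1 => env_pdf sigma mu x1 xth) 0 xth = R1).
  { apply RInt_ext. intros y _. apply env_sym. }
  assert (HR1 : R1 = 4 * xth / (sigma^4 * (1 - mu^2)) * exp (- xth^2 / a) * I).
  { unfold R1, I.
    rewrite <- (RInt_scal (V:=R_CompleteNormedModule)) by apply g_ex_RInt.
    apply RInt_ext. intros y _. rewrite env_factor by lra. fold a.
    reflexivity. }
  assert (HR1d : RInt (fun x2 => env_pdf sigma mu xth x2) 0 xth = R1) by reflexivity.
  clearbody R1 I.
  set (v := PI^2 * sigma^2 * fD^2).
  assert (Hv : 0 < v).
  { unfold v. assert (0 < PI) by apply PI_RGT_0.
    apply Rmult_lt_0_compat; [apply Rmult_lt_0_compat|]; apply pow_lt; lra. }
  unfold is_LCR.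
  apply is_RInt_gen_ext with (fun xd => scal (2 * R1) (xd * gauss_pdf v xd)).
  { apply filter_forall. intros ab y _.
    unfold sel_joint_pdf, deriv_pdf. fold v. rewrite HR1d, HR2.
    change (scal ?c ?z) with (c * z).
    match goal with |- ?l = ?r => change (@eq R l r) end. ring. }
  replace (2 * sqrt (2 * PI) * fD * xth / (sigma ^ 3 * (1 - mu ^ 2)) * exp (- xth ^ 2 / a) * (2 * I))
    with (scal (2 * R1) (v / sqrt (2 * PI * v))).
  { exact (is_RInt_gen_scal (V:=R_NormedModule) (fun xd => xd * gauss_pdf v xd) (2*R1) (v / sqrt (2*PI*v)) (gauss_moment v Hv)). }
  change (scal ?c ?z) with (c * z).
  match goal with |- ?l = ?r => change (@eq R l r) end.
  assert (HP : 0 < PI) by apply PI_RGT_0.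
  replace (2 * PI * v) with ((2 * PI) * (PI * sigma * fD)^2) by (unfold v; ring).
  clearbody a.
  rewrite sqrt_mult_alt by lra.
  rewrite sqrt_pow2 by (apply Rmult_le_pos; [apply Rmult_le_pos|]; lra).
  set (s := sqrt (2 * PI)).
  assert (Hs : 0 < s) by (apply sqrt_lt_R0; lra).
  assert (Hs2 : s * s = 2 * PI) by (apply sqrt_sqrt; lra).
  rewrite HR1. unfold v.
  replace PI with (s * s / 2) by lra.
  field. repeat split; lra.
Qed.
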